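(* For every finite set $N$, the Ingleton region $\mathbf{H}_N^{\mathrm{Ingl}}$ is closed under duality: if $h\in\mathbf{H}_N^{\mathrm{Ingl}}$ then $h^\perp\in\mathbf{H}_N^{\mathrm{Ingl}}$.
   Context: Vectors $h$ are real functions on subsets of the finite set $N$ with $h(\varnothing)=0$, and the dual of $h$ is $h^\perp(J)=h(N\setminus J)-h(N)+\sum_{j\in J}h(\{j\})$. For a prime power $q$, a finite-dimensional vector space $V$ over $\mathrm{GF}(q)$ and subspaces $V_i\subseteq V$ ($i\in N$), let $V_J$ be the sum of the subspaces $V_i$, $i\in J$; the point $(\log q\cdot \dim V_J)_{\varnothing\ne J\subseteq N}$ is called a linearly representable vector. The Ingleton region $\mathbf{H}_N^{\mathrm{Ingl}}$ is the closure of the set of all such points (over all $q$, $V$, and choices of subspaces). *)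

(* Defs.v *)
From HB Require Import structures.
From mathcomp Require Import all_boot all_algebra all_field.
From Stdlib Require Import Reals.
Set Implicit Arguments. Unset Strict Implicit. Unset Printing Implicit Defensive.

(* A vector h : real function on subsets of N (h set0 = 0 is imposed where needed). *)
Definition setvec (N : finType) := {set N} -> R.

Definition dualvec (N : finType) (h : setvec N) : setvec N :=
  fun J => Rplus (Rminus (h (~: J)) (h setT)) (\big[Rplus/0%R]_(j in J) h [set j]).

Definition lin_rep (N : finType) (h : setvec N) : Prop :=
  exists (F : finFieldType) (V : vectType F) (Vs : N -> {vspace V}),
    forall J : {set N},
      h J = Rmult (ln (INR #|F|)) (INR (\dim (\sum_(i in J) Vs i)%VS)).

(* Ingleton region: closure (in R^{nonempty subsets}) of the linearly
   representable vectors, viewed as functions with h(set0) = 0. *)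
Definition ingleton_region (N : finType) (h : setvec N) : Prop :=
  h set0 = 0%R /\
  forall eps : R, (0 < eps)%R ->
    exists g : setvec N, lin_rep g /\
      forall J : {set N}, J != set0 -> (Rabs (Rminus (h J) (g J)) < eps)%R.

(* Main.v *)
Require Import Defs.
From HB Require Import structures.
From mathcomp Require Import all_boot all_algebra all_field.
From Stdlib Require Import Reals.
From mathcomp Require Import ssrnat ssralg.
From mathcomp Require Import zify.
From Stdlib Require Import Lra.
Import GRing.Theory.
Set Implicit Arguments. Unset Strict Implicit. Unset Printing Implicit Defensive.

Local Open Scope ring_scope.
Section Core.
Variables (F : fieldType) (N : finType) (d : nat) (A : N -> 'M[F]_d).

Definition TT := {i : N & 'I_(\rank (A i))}.
Definition tt := #|{:TT}|.
Definition ff (a : 'I_tt) : TT := enum_val a.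
Definition gg (x : TT) : 'I_tt := enum_rank x.
Lemma fgK x : ff (gg x) = x. Proof. exact: enum_rankK. Qed.
Lemma gfK a : gg (ff a) = a. Proof. exact: enum_valK. Qed.

Definition EE (K : {set N}) : 'M[F]_tt :=
  diag_mx (\row_a ((tag (ff a) \in K)%:R)).
Definition CC : 'M[F]_(tt, d) :=
  \matrix_(a < tt) row (tagged (ff a)) (row_base (A (tag (ff a)))).

Lemma EE_mul K K' : EE K *m EE K' = EE (K :&: K').
Proof.
apply/matrixP=> i j; rewrite mul_diag_mx !mxE inE.
by case: (tag (ff i) \in K); case: (tag (ff i) \in K'); case: (i == j);
  rewrite ?mul1r ?mul0r ?mulr0n.
Qed.

Lemma EE_compl K : EE K + EE (~: K) = 1%:M.
Proof.
apply/matrixP=> i j; rewrite !mxE inE.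
by case: (tag (ff i) \in K); case: (i == j); rewrite /= ?addr0 ?add0r.
Qed.

Lemma EE_setT : EE setT = 1%:M.
Proof. by apply/matrixP=> i j; rewrite !mxE inE. Qed.

Lemma EE_sum (J : {set N}) : \sum_(i in J) EE [set i] = EE J.
Proof.
apply/matrixP=> a b; rewrite summxE !mxE.
under eq_bigr => k _ do rewrite !mxE inE.
rewrite sumrMnl; congr (_ *+ _).
have [H|H] := boolP (tag (ff a) \in J).
  rewrite (bigD1 (tag (ff a))) //= eqxx big1 ?addr0 // => k /andP[_].
  by rewrite eq_sym => /negPf ->.
by rewrite big1 // => k kJ; case: eqP kJ H => // <- ->.
Qed.

Definition SS (K : {set N}) := [set a : 'I_tt | tag (ff a) \in K].

Lemma rank_EE K : \rank (EE K) = #|SS K|.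
Proof.
pose P : 'M[F]_(#|SS K|, tt) := \matrix_(k < #|SS K|) 'e_(enum_val k).
have eqP' : (EE K :=: P)%MS.
  apply/eqmxP/andP; split; apply/row_subP.
    move=> a; rewrite row_diag_mx mxE.
    have [Ha|Ha] := boolP (a \in SS K).
      move: (Ha); rewrite inE => ->; rewrite scale1r.
      have := row_sub (enum_rank_in Ha a) P.
      by rewrite rowK enum_rankK_in.
    move: (Ha); rewrite inE => /negPf ->; rewrite scale0r; exact: sub0mx.
  move=> k; rewrite rowK.
  have := row_sub (enum_val k) (EE K).
  rewrite row_diag_mx mxE.
  by have := enum_valP k; rewrite inE => ->; rewrite scale1r.
rewrite (eqmx_rank (introT eqmxP eqP')).
apply/eqP; change (row_free P); apply/row_freeP; exists P^T.
apply/matrixP=> k l; rewrite !mxE.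
rewrite (bigD1 (enum_val k)) //= big1 ?addr0.
  rewrite !mxE !eqxx /= mul1r.
  by case: eqP => [/enum_val_inj ->|H]; [rewrite eqxx|case: eqP => // E; case: H; rewrite E].
by move=> b /negPf Hb; rewrite !mxE [b == _]Hb /= mul0r.
Qed.

Lemma card_fiber i : #|[set a : 'I_tt | tag (ff a) == i]| = \rank (A i).
Proof.
have -> : [set a : 'I_tt | tag (ff a) == i] = gg @: [set x : TT | tag x == i].
  apply/setP=> a; rewrite inE; apply/idP/imsetP => [H|[x Hx ->]].
    by exists (ff a); rewrite ?inE ?gfK.
  by rewrite fgK; rewrite inE in Hx.
rewrite card_imset; last exact: (can_inj fgK).
have -> : [set x : TT | tag x == i] = [set Tagged (fun j => 'I_(\rank (A j))) k | k in 'I_(\rank (A i))].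
  apply/setP=> -[j k]; rewrite inE /=; apply/idP/imsetP => [/eqP Ej|[k' _ E]].
    by subst j; exists k.
  by have := congr1 tag E => /= ->.
rewrite card_imset ?card_ord //.
by move=> k k' E; exact: (eq_from_Tagged E).
Qed.

Lemma card_SS K : #|SS K| = (\sum_(i in K) \rank (A i))%N.
Proof.
rewrite -sum1_card (partition_big (fun a => tag (ff a)) (mem K)).
  apply: eq_bigr => i Hi; rewrite -card_fiber -sum1_card.
  apply: eq_bigl => a; rewrite !inE.
  have [->|_] := eqVneq (tag (ff a)) i.
    by rewrite andbT; exact: Hi.
  by case: (tag (ff a) \in K).
by move=> a; rewrite inE.
Qed.

Lemma row_EC K a : row a (EE K *m CC) =
  if tag (ff a) \in K then row (tagged (ff a)) (row_base (A (tag (ff a)))) else 0.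
Proof.
rewrite mul_diag_mx; case: ifP => H; apply/rowP=> j; rewrite !mxE H ?mul1r ?mul0r //.
Qed.

Lemma EC_eq K : (EE K *m CC :=: \sum_(i in K) A i)%MS.
Proof.
apply/eqmxP/andP; split.
  apply/row_subP=> a; rewrite row_EC.
  case: ifP => H; last exact: sub0mx.
  apply: (sumsmx_sup (tag (ff a))) => //.
  apply: submx_trans (row_sub _ _) _.
  by rewrite eq_row_base.
apply/sumsmx_subP=> i Hi.
rewrite -(eq_row_base (A i)); apply/row_subP=> k.
have := row_sub (gg (Tagged (fun j => 'I_(\rank (A j))) k)) (EE K *m CC).
by rewrite row_EC fgK /= Hi.
Qed.

Lemma core t' : t' = tt -> exists U : N -> 'M[F]_t', forall J : {set N},
  (\rank (\sum_(i in J) U i)%MS + \rank (\sum_(i in setT) A i)%MS =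
   \rank (\sum_(i in ~: J) A i)%MS + \sum_(i in J) \rank (A i))%N.
Proof.
move=> ->.
pose BB := kermx CC.
exists (fun i => EE [set i] *m BB^T) => J.
have rC : \rank CC = \rank (\sum_(i in setT) A i)%MS.
  by rewrite -(eqmx_rank (introT eqmxP (EC_eq setT))) EE_setT mul1mx.
have rB : \rank BB = subn tt (\rank CC) by rewrite mxrank_ker.
have hb := mxrank_mul_ker BB (EE J).
have hc : (kermx (EE J) :=: EE (~: J))%MS.
  apply/eqmxP/andP; split.
    have -> : kermx (EE J) = kermx (EE J) *m EE (~: J).
      have := EE_compl J => /(congr1 (mulmx (kermx (EE J)))).
      by rewrite mulmx1 mulmxDr mulmx_ker add0r => ->.
    exact: submxMl.
  apply/sub_kermxP; rewrite EE_mul setIC setICr; apply/matrixP=> i j; rewrite !mxE inE.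
  by rewrite mul0rn.
have hd := mxrank_mul_ker (EE (~: J)) CC.
have he : \rank (BB :&: kermx (EE J))%MS = \rank (EE (~: J) :&: kermx CC)%MS.
  by apply/eqmx_rank/eqmxP; rewrite capmxC; apply: cap_eqmx.
have hf : (#|SS J| + #|SS (~: J)|)%N = tt.
  have -> : SS (~: J) = ~: SS J by apply/setP=> a; rewrite !inE.
  by rewrite cardsC card_ord.
have hg : \rank (\sum_(i in J) EE [set i] *m BB^T)%MS = \rank (BB *m EE J).
  have -> : \rank (BB *m EE J) = \rank (EE J *m BB^T).
    by rewrite -mxrank_tr trmx_mul tr_diag_mx.
  apply/eqmx_rank/andP; split.
    apply/sumsmx_subP=> i Hi.
    have -> : EE [set i] = EE [set i] *m EE J.
      by rewrite EE_mul; congr EE; apply/setP=> k; rewrite !inE; case: eqP => // ->.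
    by rewrite -mulmxA; apply: submxMl.
  rewrite -EE_sum mulmx_suml; apply: summx_sub_sums => i _; exact: submx_refl.
rewrite hg -(eqmx_rank (introT eqmxP (EC_eq (~: J)))) -card_SS.
have := rank_EE (~: J); have := rank_leq_row CC.
move: hb hd he hf; rewrite rB rC; lia.
Qed.

End Core.

Import VectorInternalTheory.

Lemma dim_sum (F : fieldType) (vT : vectType F) (N : finType)
  (Vs : N -> {vspace vT}) (J : {set N}) :
  \dim (\sum_(i in J) Vs i)%VS = \rank (\sum_(i in J) vs2mx (Vs i))%MS.
Proof.
rewrite /dimv; apply/eqmx_rank/eqmxP.
elim/big_rec2: _ => [|i y1 y2 _ IH].
  by rewrite /= linear0 genmx0.
rewrite /=; apply: eqmx_trans (genmxE _) _.
exact: (adds_eqmx (eqmx_refl _) IH).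
Qed.

Local Close Scope ring_scope.
Local Open Scope R_scope.

Lemma big_INR (N : finType) (P : pred N) (c : N -> nat) :
  INR (\sum_(i | P i) c i)%N = \big[Rplus/0]_(i | P i) INR (c i).
Proof. apply: big_morph => //; exact: plus_INR. Qed.

Lemma big_Rmult_l (N : finType) (P : pred N) c (x : N -> R) :
  \big[Rplus/0]_(i | P i) (c * x i) = c * \big[Rplus/0]_(i | P i) x i.
Proof. elim/big_rec2: _ => [|i a b _ ->]; ring. Qed.

Lemma big_abs_bound (N : finType) (P : pred N) (a b c : N -> R) :
  (forall i, Rabs (a i - b i) <= c i) ->
  Rabs (\big[Rplus/0]_(i | P i) a i - \big[Rplus/0]_(i | P i) b i)
    <= \big[Rplus/0]_(i | P i) c i.
Proof.
move=> H.
elim/big_rec3: _ => [|i y1 y2 y3 _ IH].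
  by rewrite Rminus_0_r Rabs_R0; apply: Rle_refl.
have := H i.
replace (a i + y3 - (b i + y2)) with ((a i - b i) + (y3 - y2)) by ring.
move=> Hi; apply: Rle_trans (Rabs_triang _ _) _; lra.
Qed.

Lemma big_const_R (N : finType) (J : {set N}) (e : R) :
  \big[Rplus/0]_(j in J) e = INR #|J| * e.
Proof.
rewrite big_const; elim: #|J| => [|n IH]; first by rewrite /=; ring.
rewrite iterS IH S_INR; ring.
Qed.

Lemma lin_rep_dual (N : finType) (g : setvec N) :
  lin_rep g -> lin_rep (dualvec g).
Proof.
move=> [F [V [Vs Hg]]].
pose A := fun i => vs2mx (Vs i).
have HD : dim 'rV[F]_(tt A) = tt A by rewrite dim_matrix; lia.
have [U HU] := @core F N (dim V) A _ HD.
exists F, 'rV[F]_(tt A), (fun i => mx2vs (U i)) => J.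
rewrite /A in HU.
rewrite /dualvec !Hg.
rewrite (eq_bigr (fun j => ln (INR #|F|) * INR (\rank (vs2mx (Vs j))))); last first.
  by move=> j _; rewrite Hg dim_sum big_set1.
rewrite !dim_sum.
have -> : \rank (\sum_(i in J) vs2mx (mx2vs (U i)))%MS = \rank (\sum_(i in J) U i)%MS.
  by apply/eqmx_rank/eqmxP; apply: eqmx_sums => i _; exact: mx2vsK.
rewrite big_Rmult_l.
have := congr1 INR (HU J); rewrite !plus_INR big_INR => H.
move: H.
set X := INR (\rank (\sum_(i in J) U i)%MS).
set a := INR (\rank (\sum_(i in ~: J) vs2mx (Vs i))%MS).
set b := INR (\rank (\sum_(i in [set: N]) vs2mx (Vs i))%MS).
set s := \big[Rplus/0]_(i in J) INR (\rank (vs2mx (Vs i))).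
move=> H; have HX : X = a + s - b by lra.
rewrite HX; ring.
Qed.

Theorem mainTheorem4 (N : finType) (h : setvec N) :
  ingleton_region h -> ingleton_region (dualvec h).
Proof.
move=> [h0 Hh]; split.
  by rewrite /dualvec setC0 big_set0; ring.
move=> eps Heps.
have Hn : 0 <= INR #|N| by apply: pos_INR.
pose e := eps / (INR #|N| + 2).
have He : 0 < e by apply: Rdiv_lt_0_compat; lra.
have [g [Hg Happ]] := Hh e He.
exists (dualvec g); split; first exact: lin_rep_dual.
have g0 : g set0 = 0.
  by case: Hg => [F [V [Vs Hg']]]; rewrite Hg' big_set0 dimv0 /= Rmult_0_r.
have Hall : forall K, Rabs (h K - g K) < e.
  move=> K; case: (eqVneq K set0) => [->|HK]; last exact: Happ.
  by rewrite h0 g0 Rminus_0_r Rabs_R0.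
move=> J HJ; rewrite /dualvec.
have H1 := Hall (~: J); have H2 := Hall setT.
have H3 := @big_abs_bound N (mem J) (fun j => h [set j]) (fun j => g [set j]) (fun _ => e)
  (fun j => Rlt_le _ _ (Hall [set j])).
rewrite big_const_R in H3.
have H4 : INR #|J| <= INR #|N| by apply: le_INR; apply/leP; exact: max_card.
have H5 : INR #|J| * e <= INR #|N| * e by apply: Rmult_le_compat_r; lra.
have Heps' : eps = (INR #|N| + 2) * e by rewrite /e; field; lra.
move: H1 H2 H3.
set a1 := h (~: J) - g (~: J); set a2 := h setT - g setT.
set s1 := \big[Rplus/0]_(j in J) h [set j]; set s2 := \big[Rplus/0]_(j in J) g [set j].
replace (h (~: J) - h setT + s1 - (g (~: J) - g setT + s2)) with (a1 - a2 + (s1 - s2))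
  by (rewrite /a1 /a2; ring).
move=> H1 H2 H3.
apply: Rle_lt_trans (Rabs_triang _ _) _.
have H6 : Rabs (a1 - a2) <= Rabs a1 + Rabs a2.
  by rewrite /Rminus; apply: Rle_trans (Rabs_triang _ _) _; rewrite Rabs_Ropp; apply: Rle_refl.
lra.
Qed.
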